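(* In the setting below, if $\varphi,\psi\in X_N$ satisfy $\mathrm{dist}_\infty(\mathrm{supp}\,\varphi,\mathrm{supp}\,\psi)>l-1$, then $$\langle\mathcal{T}\varphi,\psi\rangle=\langle\mathcal{T}'\varphi,\psi\rangle=\langle\mathcal{R}\varphi,\psi\rangle=\langle\mathcal{R}'\varphi,\psi\rangle=0.$$
   Context: Standing: $d\ge2$, $m\ge1$, $L\ge3$ odd, $N\ge1$. $\mathbb{T}_N=(\mathbb{Z}/L^N\mathbb{Z})^d$; $\rho_\infty(x,y)=\min\{|x-y+z|_\infty:z\in(L^N\mathbb{Z})^d\}$; $\mathrm{dist}_\infty(M_1,M_2)=\min\{\rho_\infty(x,y):x\in M_1,y\in M_2\}$. $X_N$: maps $\mathbb{T}_N\to\mathbb{R}^m$ with zero sum, $\langle\varphi,\psi\rangle=\sum_x\langle\varphi(x),\psi(x)\rangle$. $(\nabla_j\varphi)(x)=\varphi(x+e_j)-\varphi(x)$. $A:\mathbb{R}^{m\times d}\to\mathbb{R}^{m\times d}$ linear, symmetric, $(AF,F)\ge c_0|F|^2$, $c_0>0$; $(\varphi,\psi)_+=\sum_x(A\nabla\varphi(x),\nabla\psi(x))$. Let $l\ge3$ be an integer with $l-1<L^N$, $Q=\{1,\dots,l-1\}^d$. $\Pi_x$ is the $(\cdot,\cdot)_+$-orthogonal projection of $X_N$ onto $\{\varphi\in X_N:\varphi=0\text{ outside }Q+x\}$; $\mathcal{T}=l^{-d}\sum_x\Pi_x$, $\mathcal{R}=\mathrm{id}-\mathcal{T}$; $\mathcal{T}',\mathcal{R}'$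 are the adjoints with respect to $\langle\cdot,\cdot\rangle$. *)

(* Defs.v *)
From Stdlib Require Import ClassicalEpsilon.
From mathcomp Require Import all_boot all_order all_algebra.
Set Implicit Arguments. Unset Strict Implicit. Unset Printing Implicit Defensive.
Import Order.TTheory GRing.Theory Num.Theory.
Local Open Scope ring_scope.

(* Discrete torus (Z / n.+1 Z)^d ; used with n.+1 = L^N. *)
Definition site (d n : nat) := {ffun 'I_d -> 'I_n.+1}.

Definition shift d n (x : site d n) (j : 'I_d) : site d n :=
  [ffun k => if k == j then inZp (x k + 1) else x k].

Definition addq d n (x : site d n) (q : 'I_d -> nat) : site d n :=
  [ffun k => inZp (x k + q k)].

(* min over z in Z of |a - b + z (n+1)| *)
Definition cdist n (a b : 'I_n.+1) : nat :=
  let k := ((a + n.+1 - b) %% n.+1)%N in minn k (n.+1 - k).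

(* rho_infty(x,y) = min_{z in (n+1 Z)^d} |x - y + z|_infty *)
Definition rho d n (x y : site d n) : nat := (\max_(j < d) cdist (x j) (y j))%N.

(* y \in Q + x, Q = {1,...,l-1}^d *)
Definition inQ d n (l : nat) (x y : site d n) : bool :=
  [exists q : {ffun 'I_d -> 'I_l},
     [forall j, (0 < q j)%N] && (y == addq x (fun k => nat_of_ord (q k)))].

Section Ops.
Variables (R : realFieldType) (d n m : nat).
Local Notation F := (site d n -> 'cV[R]_m).

Definition inX (phi : F) : Prop := \sum_x phi x = 0.

Definition ip (phi psi : F) : R := \sum_x \sum_(i < m) phi x i 0 * psi x i 0.

Definition grad (phi : F) (x : site d n) : 'M[R]_(m, d) :=
  \matrix_(i, j) (phi (shift x j) i 0 - phi x i 0).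

Definition frob (F1 G1 : 'M[R]_(m, d)) : R := \sum_i \sum_j F1 i j * G1 i j.

Definition formA (A : 'M[R]_(m, d) -> 'M[R]_(m, d)) (phi psi : F) : R :=
  \sum_x frob (A (grad phi x)) (grad psi x).

Definition inV (l : nat) (x : site d n) (psi : F) : Prop :=
  inX psi /\ forall y, ~~ inQ l x y -> psi y = 0.

Definition fsub (phi psi : F) : F := fun y => phi y - psi y.

Definition choose_fn (P : F -> Prop) : F := epsilon (inhabits (fun _ => 0)) P.

Definition Pi A l x (phi : F) : F :=
  choose_fn (fun psi => inV l x psi /\
     forall chi, inV l x chi -> formA A (fsub phi psi) chi = 0).

Definition Top A l (phi : F) : F :=
  fun y => (l%:R ^- d) *: \sum_x Pi A l x phi y.

Definition Rop A l (phi : F) : F := fsub phi (Top A l phi).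

Definition adjoint (S : F -> F) (phi : F) : F :=
  choose_fn (fun psi => inX psi /\ forall chi, inX chi -> ip (S chi) phi = ip chi psi).

End Ops.

(* Main.v *)
Require Import Defs.
From Stdlib Require Import ClassicalEpsilon FunctionalExtensionality.
From mathcomp Require Import all_boot all_order all_algebra.
From mathcomp Require Import ring lra zify.
Set Implicit Arguments. Unset Strict Implicit. Unset Printing Implicit Defensive.
Import Order.TTheory GRing.Theory Num.Theory.
Local Open Scope ring_scope.
Local Notation addq := Defs.addq.
Section GS.
Variables (R : realFieldType) (V : lmodType R) (B : V -> V -> R).
Hypothesis BlinL : forall a u v w, B (a *: u + v) w = a * B u w + B v w.
Hypothesis Bsym : forall u v, B u v = B v u.
Hypothesis Bpos : forall u, 0 <= B u u.

Lemma B0l w : B 0 w = 0.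
Proof. have := BlinL 1 0 0 w; rewrite scaler0 addr0 mul1r => h. lra. Qed.
Lemma BDl u v w : B (u + v) w = B u w + B v w.
Proof. by rewrite -[u]scale1r BlinL mul1r scale1r. Qed.
Lemma BZl a u w : B (a *: u) w = a * B u w.
Proof. by rewrite -[a *: u]addr0 BlinL B0l addr0. Qed.
Lemma BNl u w : B (- u) w = - B u w.
Proof. by rewrite -scaleN1r BZl mulN1r. Qed.
Lemma BBl u v w : B (u - v) w = B u w - B v w.
Proof. by rewrite BDl BNl. Qed.
Lemma BDr u v w : B w (u + v) = B w u + B w v.
Proof. by rewrite Bsym BDl Bsym (Bsym v). Qed.
Lemma BZr a u w : B w (a *: u) = a * B w u.
Proof. by rewrite Bsym BZl Bsym. Qed.
Lemma BBr u v w : B w (u - v) = B w u - B w v.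
Proof. by rewrite Bsym BBl Bsym (Bsym v). Qed.

Lemma Bnull w v : B w w = 0 -> B w v = 0.
Proof.
move=> hw.
set b := B w v; set c := B v v.
have c0 : 0 <= c by apply: Bpos.
set s := (c + 1)^-1.
have hs : s * (c + 1) = 1 by rewrite mulVf //; apply: lt0r_neq0; lra.
have s0 : 0 < s by rewrite invr_gt0; lra.
have := Bpos (w + (- b * s) *: v).
rewrite BDl !BDr !BZl !BZr hw (Bsym v w) -/b -/c => h.
have hsc : s * c = 1 - s by rewrite mulrDr mulr1 in hs; lra.
have e : 0 + - b * s * b + (- b * s * b + - b * s * (- b * s * c)) = - (b * b) * s * 2 + (b * b) * s * (s * c) by ring.
rewrite e hsc in h.
have X0 : 0 <= b * b by nra.
have hb : b * b <= 0 by nra.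
nra.
Qed.

Inductive inspan (U : seq V) : V -> Prop :=
| isp0 : inspan U 0
| ispL a u v : u \in U -> inspan U v -> inspan U (a *: u + v).

Lemma inspan_add U u v : inspan U u -> inspan U v -> inspan U (u + v).
Proof.
elim=> [|a w z wU _ IH] hv; first by rewrite add0r.
by rewrite -addrA; apply: ispL => //; apply: IH.
Qed.
Lemma inspan_scale U a u : inspan U u -> inspan U (a *: u).
Proof.
elim=> [|b w z wU _ IH]; first by rewrite scaler0; apply: isp0.
by rewrite scalerDr scalerA; apply: ispL.
Qed.
Lemma inspan_sub U u v : inspan U u -> inspan U v -> inspan U (u - v).
Proof. by move=> hu hv; apply: inspan_add => //; rewrite -scaleN1r; apply: inspan_scale. Qed.
Lemma inspan_cons U w v : inspan U v -> inspan (w :: U) v.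
Proof. elim=> [|a u z uU _ IH]; first exact: isp0. by apply: ispL => //; rewrite inE uU orbT. Qed.
Lemma inspan_mem U u : u \in U -> inspan U u.
Proof. by move=> uU; rewrite -[u]addr0 -[u]scale1r; apply: ispL => //; apply: isp0. Qed.
Lemma orth_span U x : (forall u, u \in U -> B x u = 0) -> forall v, inspan U v -> B x v = 0.
Proof.
move=> h v; elim=> [|a u z uU _ IH]; first by rewrite Bsym B0l.
by rewrite BDr BZr h // IH mulr0 addr0.
Qed.

Lemma GS (U : seq V) : forall phi, exists P, inspan U P /\
   forall v, inspan U v -> B (phi - P) v = 0.
Proof.
elim: U => [|u U IH] phi.
  by exists 0; split; [apply: isp0 | apply: orth_span].
have [P1 [P1s P1o]] := IH phi.
have [Pu [Pus Puo]] := IH u.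
set w := u - Pu.
have wo : forall v, inspan U v -> B w v = 0 by move=> v /Puo.
set t := B (phi - P1) w / B w w.
exists (P1 + t *: w); split.
  apply: inspan_add; first exact: inspan_cons.
  apply: inspan_scale; apply: inspan_sub; first by apply: inspan_mem; rewrite inE eqxx.
  exact: inspan_cons.
have e : phi - (P1 + t *: w) = (phi - P1) + (- t) *: w by rewrite opprD addrA scaleNr.
have hw : B (phi - (P1 + t *: w)) w = 0.
  rewrite e BDl BZl.
  have [h0|hn] := eqVneq (B w w) 0.
    by rewrite h0 mulr0 (Bsym _ w) Bnull // add0r.
  by rewrite /t mulNr -mulrA mulVf // mulr1 subrr.
have hU : forall v, inspan U v -> B (phi - (P1 + t *: w)) v = 0.
  by move=> v hv; rewrite e BDl BZl P1o // wo // mulr0 addr0.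
apply: orth_span => v; rewrite inE => /orP [/eqP ->|vU]; last by apply: hU; apply: inspan_mem.
have -> : u = w + Pu by rewrite /w subrK.
by rewrite BDr hw hU // addr0.
Qed.
End GS.

Section Conc.
Variables (R : realFieldType) (d n m : nat) (A : 'M[R]_(m, d) -> 'M[R]_(m, d)) (c0 : R).
Hypothesis Alin : forall (a : R) (F G : 'M[R]_(m, d)), A (a *: F + G) = a *: A F + A G.
Hypothesis Asym : forall F G, frob (A F) G = frob F (A G).
Hypothesis c0pos : 0 < c0.
Hypothesis Acoer : forall F, c0 * frob F F <= frob (A F) F.
Local Notation F := (site d n -> 'cV[R]_m).

Lemma frobDl a (F1 G1 H : 'M[R]_(m, d)) : frob (a *: F1 + G1) H = a * frob F1 H + frob G1 H.
Proof.
rewrite /frob mulr_sumr -big_split /=; apply: eq_bigr => i _.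
rewrite mulr_sumr -big_split /=; apply: eq_bigr => j _; rewrite !mxE; ring.
Qed.
Lemma frob_sym (F1 G1 : 'M[R]_(m, d)) : frob F1 G1 = frob G1 F1.
Proof. by rewrite /frob; apply: eq_bigr => i _; apply: eq_bigr => j _; rewrite mulrC. Qed.
Lemma frob0r (F1 : 'M[R]_(m, d)) : frob F1 0 = 0.
Proof. by rewrite /frob big1 // => i _; rewrite big1 // => j _; rewrite mxE mulr0. Qed.
Lemma frob_ge0 (F1 : 'M[R]_(m, d)) : 0 <= frob F1 F1.
Proof. by rewrite /frob sumr_ge0 // => i _; rewrite sumr_ge0 // => j _; rewrite -expr2 sqr_ge0. Qed.
Lemma frob_eq0 (F1 : 'M[R]_(m, d)) : frob F1 F1 = 0 -> F1 = 0.
Proof.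
move=> h; apply/matrixP => i j; rewrite mxE.
have h1 := psumr_eq0P (fun i _ => sumr_ge0 _ (fun j _ => (sqr_ge0 (F1 i j)))) h.
have := h1 i isT.
move/(psumr_eq0P (fun j _ => sqr_ge0 (F1 i j))) => /(_ j isT).
by rewrite expr2 => /eqP; rewrite mulf_eq0 orbb => /eqP.
Qed.
Lemma AFF_ge0 (F1 : 'M[R]_(m, d)) : 0 <= frob (A F1) F1.
Proof. have := Acoer F1; have := mulr_ge0 (ltW c0pos) (frob_ge0 F1); lra. Qed.

Lemma grad_lin a (f g : F) x : grad (fun y => a *: f y + g y) x = a *: grad f x + grad g x.
Proof. apply/matrixP => i j; rewrite !mxE; ring. Qed.

Lemma formA_linl a (f g h : F) :
  formA A (fun y => a *: f y + g y) h = a * formA A f h + formA A g h.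
Proof.
rewrite /formA mulr_sumr -big_split /=; apply: eq_bigr => x _.
by rewrite grad_lin Alin frobDl.
Qed.
Lemma formA_sym (f g : F) : formA A f g = formA A g f.
Proof. by apply: eq_bigr => x _; rewrite Asym frob_sym. Qed.
Lemma formA_ge0 (f : F) : 0 <= formA A f f.
Proof. by apply: sumr_ge0 => x _; apply: AFF_ge0. Qed.
End Conc.

Section Sites.
Variables (d n : nat).
Local Notation st := (site d n).
Local Open Scope nat_scope.

Lemma addq_ext (x : st) (q q' : 'I_d -> nat) : (forall k, q k = q' k) -> addq x q = addq x q'.
Proof. by move=> h; apply/ffunP => k; rewrite !ffunE h. Qed.

Lemma addq0 (x : st) : addq x (fun _ => 0%N) = x.
Proof. apply/ffunP => k; rewrite ffunE addn0; apply: val_inj => /=; exact: modn_small. Qed.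

Lemma shift_addq (x : st) (q : 'I_d -> nat) j :
  shift (addq x q) j = addq x (fun k => (q k + (k == j))%N).
Proof.
apply/ffunP => k; rewrite !ffunE; case: eqP => [->|_].
  by apply: val_inj => /=; rewrite modnDml addnA.
by rewrite addn0.
Qed.

Lemma shift_inj (z w : st) j : shift z j = shift w j -> z = w.
Proof.
move=> /ffunP h; apply/ffunP => k; have := h k; rewrite !ffunE.
case: eqP => [->|_] // /(congr1 val) /= /eqP.
rewrite eqn_modDr !modn_small ?ltn_ord // => /eqP e; exact: val_inj.
Qed.

Lemma inQ_addq l (x y : st) : inQ l x y ->
  exists q : 'I_d -> nat, (forall k, 0 < q k < l)%N /\ y = addq x q.
Proof.
move=> /existsP [q /andP [/forallP hq /eqP ->]].
by exists (fun k => nat_of_ord (q k)); split => // k; rewrite hq ltn_ord.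
Qed.

Lemma inQ_intro l (x : st) (q : 'I_d -> nat) : (forall k, 0 < q k < l)%N -> inQ l x (addq x q).
Proof.
move=> hq; apply/existsP.
have hl : forall k, (q k < l)%N by move=> k; case/andP: (hq k).
exists [ffun k => Ordinal (hl k)]; apply/andP; split.
  by apply/forallP => k; rewrite ffunE /=; case/andP: (hq k).
by apply/eqP; apply: addq_ext => k; rewrite ffunE.
Qed.

Lemma notinQ_self l (x : st) : (0 < d)%N -> (l <= n.+1)%N -> ~~ inQ l x x.
Proof.
move=> d0 ln; apply/negP => /inQ_addq [q [hq /ffunP e]].
have := e (Ordinal d0); rewrite ffunE => /(congr1 val) /= /eqP.
set a := nat_of_ord _; set b := q _.
move=> h; have : (a + b == a + 0 %[mod n.+1]).
  by rewrite -(eqP h) addn0 modn_small ?ltn_ord.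
rewrite eqn_modDl mod0n.
have /andP [b0 bl] := hq (Ordinal d0).
by rewrite modn_small ?(leq_trans bl) // gtn_eqF.
Qed.

Lemma cdist_le (a s t : nat) :
  cdist (inZp (a + s) : 'I_n.+1) (inZp (a + t)) <= maxn (s - t) (t - s).
Proof.
rewrite /cdist /=.
set v := ((a + t) %% n.+1); set u := ((a + s) %% n.+1).
set k := ((u + n.+1 - v) %% n.+1).
have vlt : v < n.+1 by rewrite ltn_mod.
have E : (k + (a + t)) %% n.+1 = (a + s) %% n.+1.
  rewrite modnDml -modnDmr -/v subnK; last by rewrite (leq_trans (ltnW vlt)) // leq_addl.
  by rewrite modnDr modn_mod.
have klt : k < n.+1 by rewrite ltn_mod.
case: (leqP t s) => ts.
  have E2 : (k + (a + t) == (s - t) + (a + t) %[mod n.+1]).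
    by rewrite E addnCA subnK.
  rewrite eqn_modDr (modn_small klt) in E2.
  rewrite (eqP E2); apply: leq_trans (geq_minl _ _) _.
  by apply: leq_trans (leq_mod _ _) _; apply: leq_maxl.
have E2 : ((k + (t - s)) + (a + s) == 0 + (a + s) %[mod n.+1]).
  by rewrite -addnA (addnCA (t - s)) subnK ?(ltnW ts) // E.
rewrite eqn_modDr mod0n in E2.
have [->|kp] := posnP k; first by rewrite minnE subn0 subnn.
apply: leq_trans (geq_minr _ _) _.
have : n.+1 <= k + (t - s) by apply: dvdn_leq; [rewrite addn_gt0 kp | exact: E2].
move=> h; apply: leq_trans (leq_maxr _ _); lia.
Qed.
End Sites.

Section Main.
Variables (R : realFieldType) (d n m : nat) (A : 'M[R]_(m, d) -> 'M[R]_(m, d)) (c0 : R).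
Hypothesis Alin : forall (a : R) (F G : 'M[R]_(m, d)), A (a *: F + G) = a *: A F + A G.
Hypothesis Asym : forall F G, frob (A F) G = frob F (A G).
Hypothesis c0pos : 0 < c0.
Hypothesis Acoer : forall F, c0 * frob F F <= frob (A F) F.
Variable l : nat.
Hypothesis d0 : (0 < d)%N.
Hypothesis l1 : (1 < l)%N.
Hypothesis ln : (l <= n.+1)%N.
Local Notation F := (site d n -> 'cV[R]_m).

Lemma sum_delta (j : 'I_d) : (\sum_(k < d) (k == j) = 1)%N.
Proof. by rewrite (bigD1 j) //= eqxx big1 // => k /negbTE ->. Qed.

Lemma def_V x (chi : F) : (forall y, ~~ inQ l x y -> chi y = 0) ->
  formA A chi chi = 0 -> forall y, chi y = 0.
Proof.
move=> hsupp H.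
have hg : forall z, grad chi z = 0.
  move=> z; apply: frob_eq0.
  have h : frob (A (grad chi z)) (grad chi z) = 0.
    by move: H; rewrite /formA => /psumr_eq0P; apply => // w _; apply: (AFF_ge0 c0pos Acoer).
  have := Acoer (grad chi z); have := frob_ge0 (grad chi z); rewrite h.
  rewrite pmulr_rle0 // => h1 h2; apply/eqP; rewrite eq_le h2 h1 //.
have hs : forall z j, chi (shift z j) = chi z.
  move=> z j; apply/matrixP => i k; rewrite (ord1 k).
  have := congr1 (fun M : 'M[R]_(m, d) => M i j) (hg z); rewrite !mxE => /eqP; rewrite subr_eq0 => /eqP.
  done.
have ha : forall s (q : 'I_d -> nat), (\sum_k q k)%N = s -> chi (addq x q) = chi x.
  elim => [|s IH] q hq.
    move: hq => /eqP; rewrite sum_nat_eq0 => /forallP h0.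
    suff -> : addq x q = x by [].
    by rewrite -{2}(addq0 x); apply: addq_ext => k; apply/eqP; apply: h0.
  case: (pickP (fun k => (0 < q k)%N)) => [j hj|h0]; last first.
    move: hq; rewrite big1 // => k _; move: (h0 k) => /= /negbT; rewrite lt0n negbK => /eqP.
    done.
  set q' := fun k => (q k - (k == j))%N.
  have e : forall k, q k = (q' k + (k == j))%N.
    by move=> k; rewrite /q'; case: eqP => [->|_] /=; rewrite ?subn0 ?addn0 ?subnK.
  rewrite (addq_ext x e) -shift_addq hs; apply: IH.
  move: hq; rewrite (eq_bigr _ (fun k _ => e k)) big_split /= sum_delta addn1.
  by case.
move=> y; case: (boolP (inQ l x y)) => [/inQ_addq [q [_ ->]]|/hsupp //].
by rewrite (ha _ q erefl); apply: hsupp; apply: notinQ_self.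
Qed.

Lemma inV_lin x a (f g : F) : inV l x f -> inV l x g -> inV l x (fun y => a *: f y + g y).
Proof.
move=> [sf hf] [sg hg]; split.
  by rewrite /inX big_split /= -scaler_sumr sf sg scaler0 addr0.
by move=> y hy; rewrite hf // hg // scaler0 addr0.
Qed.
Lemma inV0 (x : site d n) : inV l x (fun _ => 0 : 'cV[R]_m).
Proof. by split => //; rewrite /inX big1. Qed.

Lemma sum_ind (y : site d n) : \sum_z ((z == y)%:R : R) = 1.
Proof. by rewrite (bigD1 y) //= eqxx big1 ?addr0 // => z /negbTE ->. Qed.

Local Notation Vt := {ffun site d n -> 'cV[R]_m}.

Lemma Pi_exists x (phi : F) : exists psi, inV l x psi /\
  forall chi, inV l x chi -> formA A (fsub phi psi) chi = 0.
Proof.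
set y0 := addq x (fun _ => 1%N).
have y0Q : inQ l x y0 by apply: inQ_intro => k; rewrite l1.
pose e (i : 'I_m) : 'cV[R]_m := delta_mx i 0.
pose u (y : site d n) (i : 'I_m) : Vt :=
  [ffun z => (((z == y)%:R : R) - (z == y0)%:R) *: e i].
pose U := [seq u y i | y <- enum [pred y | inQ l x y], i <- enum 'I_m].
pose B (f g : Vt) := formA A f g.
have BL : forall a (f g h : Vt), B (a *: f + g) h = a * B f h + B g h.
  move=> a f g h; rewrite /B (_ : fun_of_fin (a *: f + g) = fun y => a *: f y + g y).
    exact: formA_linl.
  by apply: functional_extensionality => y; rewrite !ffunE.
have BS : forall f g : Vt, B f g = B g f by move=> f g; apply: formA_sym.
have BP : forall f : Vt, 0 <= B f f by move=> f; apply: (formA_ge0 c0pos Acoer).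
have [P [PU Po]] := GS BL BS BP U [ffun y => phi y].
have UV : forall v, inspan U v -> inV l x v.
  move=> v; elim=> [|a w z0 wU _ IH].
    rewrite (_ : fun_of_fin 0 = fun _ => 0); first exact: inV0.
    by apply: functional_extensionality => y; rewrite !ffunE.
  rewrite (_ : fun_of_fin (a *: w + z0) = fun y => a *: w y + z0 y); last first.
    by apply: functional_extensionality => y; rewrite !ffunE.
  apply: inV_lin => //.
  move: wU => /allpairsP [[y i] [/=]]; rewrite mem_enum inE => yQ _ ->.
  split.
    rewrite /inX (eq_bigr (fun z => (((z == y)%:R : R) - (z == y0)%:R) *: e i)).
      by rewrite -scaler_suml sumrB !sum_ind subrr scale0r.
    by move=> z _; rewrite ffunE.
  move=> z zQ; rewrite ffunE.
  have -> : (z == y) = false by apply/negbTE; apply: contraNneq zQ => ->.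
  have -> : (z == y0) = false by apply/negbTE; apply: contraNneq zQ => ->.
  by rewrite subrr scale0r.
exists (fun y => P y); split; first exact: UV.
move=> chi hchi.
have -> : fsub phi (fun y => P y) = fun_of_fin ([ffun y => phi y] - P).
  by apply: functional_extensionality => y; rewrite !ffunE.
have -> : chi = fun_of_fin [ffun y => chi y].
  by apply: functional_extensionality => y; rewrite !ffunE.
apply: Po.
have -> : [ffun y => chi y] = \sum_(y | inQ l x y) \sum_(i < m) chi y i 0 *: u y i.
  case: hchi => hsum hsupp.
  apply/ffunP => z; rewrite ffunE sum_ffunE; apply/matrixP => k o; rewrite (ord1 o) summxE.
  rewrite (eq_bigr (fun y => chi y k 0 * (((z == y)%:R : R) - (z == y0)%:R))); last first.
    move=> y _; rewrite sum_ffunE summxE (bigD1 k) //= big1 ?addr0.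
      by rewrite /u /e !ffunE !mxE !eqxx /= mulr1.
    by move=> i ik; rewrite /u /e !ffunE !mxE [k == i]eq_sym (negbTE ik) /= !mulr0.
  rewrite (eq_bigr _ (fun y _ => mulrBr _ _ _)) sumrB -mulr_suml.
  have S0 : \sum_(y | inQ l x y) chi y k 0 = 0.
    rewrite big_mkcond /= (eq_bigr (fun y => chi y k 0)).
      by rewrite -summxE hsum mxE.
    by move=> y _; case: ifP => // /negbT /hsupp ->; rewrite mxE.
  rewrite S0 mul0r subr0.
  case: (boolP (inQ l x z)) => zQ.
    rewrite (bigD1 z) //= eqxx mulr1 big1 ?addr0 // => y /andP [_ yz].
    by rewrite eq_sym (negbTE yz) mulr0.
  rewrite hsupp // mxE big1 // => y yQ.
  have -> : (z == y) = false by apply/negbTE; apply: contraNneq zQ => ->.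
  by rewrite mulr0.
apply: big_ind => //; [exact: isp0 | exact: inspan_add | move=> y yQ].
apply: big_ind => //; [exact: isp0 | exact: inspan_add | move=> i _].
apply: inspan_scale; apply: inspan_mem; apply: allpairs_f; by rewrite mem_enum.
Qed.

Lemma Pi_spec x (phi : F) : inV l x (Pi A l x phi) /\
  forall chi, inV l x chi -> formA A (fsub phi (Pi A l x phi)) chi = 0.
Proof. exact: (epsilon_spec _ _ (Pi_exists x phi)). Qed.

Lemma vecE (u v : 'cV[R]_m) : (forall i, u i 0 = v i 0) -> u = v.
Proof. by move=> h; apply/matrixP => i o; rewrite (ord1 o). Qed.

Lemma Pi_lin x a (f g : F) :
  Pi A l x (fun y => a *: f y + g y) = fun y => a *: Pi A l x f y + Pi A l x g y.
Proof.
set h := fun y => a *: f y + g y.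
have [VP oP] := Pi_spec x h.
have [Vf of_] := Pi_spec x f.
have [Vg og] := Pi_spec x g.
set P := Pi A l x h; set Pf := Pi A l x f; set Pg := Pi A l x g.
set P' := fun y => a *: Pf y + Pg y.
have VP' : inV l x P' by apply: inV_lin.
set D := fun y => (-1) *: P' y + P y.
have VD : inV l x D by apply: inV_lin.
have oD : forall chi, inV l x chi -> formA A D chi = 0.
  move=> chi hchi.
  have -> : D = fun y => (-1) *: fsub h P y + (a *: fsub f Pf y + fsub g Pg y).
    apply: functional_extensionality => y; apply: vecE => i.
    by rewrite /D /P' /fsub /h !mxE; ring.
  by rewrite !(formA_linl Alin) oP // of_ // og // !mulr0 !addr0.
have D0 := def_V (proj2 VD) (oD D VD).
apply: functional_extensionality => y; apply: vecE => i.
have := congr1 (fun M : 'cV[R]_m => M i 0) (D0 y); rewrite /D /P' !mxE => e.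
move: e; lra.
Qed.

Lemma ip_Top (phi psi : F) :
  ip (Top A l phi) psi = (l%:R ^- d) * \sum_x ip (Pi A l x phi) psi.
Proof.
rewrite /ip /Top.
transitivity (\sum_y \sum_(i < m) \sum_x l%:R ^- d * (Pi A l x phi y i 0 * psi y i 0)).
  apply: eq_bigr => y _; apply: eq_bigr => i _.
  rewrite mxE summxE mulr_sumr mulr_suml; apply: eq_bigr => x _; ring.
rewrite mulr_sumr [RHS](eq_bigr (fun x => \sum_y \sum_(i < m) l%:R ^- d * (Pi A l x phi y i 0 * psi y i 0))); last first.
  by move=> x _; rewrite mulr_sumr; apply: eq_bigr => y _; rewrite mulr_sumr.
rewrite [RHS]exchange_big /=; apply: eq_bigr => y _; exact: exchange_big.
Qed.

Lemma frobA0 (G : 'M[R]_(m, d)) : frob (A 0) G = 0.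
Proof. by rewrite Asym frob_sym frob0r. Qed.

Lemma part1 (phi psi : F) :
  (forall x (b q0 : 'I_d -> nat), (forall k, b k <= l)%N -> (forall k, 0 < q0 k < l)%N ->
      phi (addq x b) != 0 -> psi (addq x q0) != 0 -> False) ->
  ip (Top A l phi) psi = 0.
Proof.
move=> Hg; rewrite ip_Top big1 ?mulr0 // => x _.
have [[_ Psupp] Po] := Pi_spec x phi.
have VP := (Pi_spec x phi).1.
set P := Pi A l x phi in Psupp Po VP *.
case: (pickP (fun y => inQ l x y && (psi y != 0))) => [y0 /andP [y0Q py0]| hno]; last first.
  rewrite /ip big1 // => y _; rewrite big1 // => i _.
  case: (boolP (inQ l x y)) => yQ.
    have : psi y = 0 by move: (hno y); rewrite yQ /= => /negbFE /eqP.
    by move=> ->; rewrite mxE mulr0.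
  by rewrite Psupp // mxE mul0r.
have [q0 [hq0 ey0]] := inQ_addq y0Q.
have phi0 : forall b : 'I_d -> nat, (forall k, b k <= l)%N -> phi (addq x b) = 0.
  move=> b hb; case: (eqVneq (phi (addq x b)) 0) => // h; exfalso.
  by apply: (Hg x b q0) => //; rewrite -ey0.
have loc : forall chi, inV l x chi -> forall z, frob (A (grad phi z)) (grad chi z) = 0.
  move=> chi [_ hsupp] z.
  case: (eqVneq (grad chi z) 0) => [->|hne]; first exact: frob0r.
  suff -> : grad phi z = 0 by apply: frobA0.
  case: (pickP (fun p : 'I_m * 'I_d => grad chi z p.1 p.2 != 0)) => [[i j] /= hij|h0]; last first.
    case/eqP: hne; apply/matrixP => i j; move: (h0 (i, j)) => /= /negbFE /eqP ->.
    by rewrite mxE.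
  have [b [hb ->]] : exists b : 'I_d -> nat, (forall k, b k < l)%N /\ z = addq x b.
    case: (eqVneq (chi z) 0) => hz.
      have : chi (shift z j) != 0.
        by apply: contraNneq hij; rewrite mxE hz => ->; rewrite mxE subrr.
      case: (boolP (inQ l x (shift z j))) => [sQ _|/hsupp -> //]; last by rewrite eqxx.
      have [q [hq eq]] := inQ_addq sQ.
      exists (fun k => q k - (k == j))%N; split.
        by move=> k; case/andP: (hq k) => _ qk; apply: leq_ltn_trans qk; apply: leq_subr.
      apply: (@shift_inj _ _ _ _ j); rewrite eq shift_addq; apply: addq_ext => k.
      by case: eqP => [->|_] /=; rewrite ?subn0 ?addn0 // subnK //; case/andP: (hq j).
    case: (boolP (inQ l x z)) => [zQ|/hsupp]; last by move=> e; move: hz; rewrite e eqxx.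
    have [q [hq eq]] := inQ_addq zQ.
    by exists q; split => // k; case/andP: (hq k).
  apply/matrixP => i' j'; rewrite !mxE shift_addq !phi0 ?subrr // => k.
    exact: ltnW.
  by move: (hb k); case: (k == j') => /=; rewrite ?addn1 ?addn0 //; apply: ltnW.
have fo : forall chi, inV l x chi -> formA A phi chi = 0.
  by move=> chi hchi; apply: big1 => z _; apply: loc.
have Pz : forall chi, inV l x chi -> formA A P chi = 0.
  move=> chi hchi; have := Po chi hchi.
  have -> : fsub phi P = fun y => (-1) *: P y + phi y.
    by apply: functional_extensionality => y; apply: vecE => i; rewrite /fsub !mxE; ring.
  rewrite (formA_linl Alin) fo //; lra.
have P0 := def_V Psupp (Pz P VP).
by rewrite /ip big1 // => y _; rewrite P0 big1 // => i _; rewrite mxE mul0r.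
Qed.

Section Adj.
Variable S : F -> F.
Hypothesis Slin : forall a (f g : F), S (fun y => a *: f y + g y) = fun y => a *: S f y + S g y.
Variable phi : F.
Let g (chi : F) := ip (S chi) phi.

Lemma ip_linl a (f h k : F) : ip (fun y => a *: f y + h y) k = a * ip f k + ip h k.
Proof.
rewrite /ip mulr_sumr -big_split; apply: eq_bigr => y _ /=.
rewrite mulr_sumr -big_split; apply: eq_bigr => i _ /=; rewrite !mxE; ring.
Qed.

Lemma g_lin a (f h : F) : g (fun y => a *: f y + h y) = a * g f + g h.
Proof. by rewrite /g Slin ip_linl. Qed.

Lemma g0 : g (fun _ => 0) = 0.
Proof.
have := g_lin 1 (fun _ => 0) (fun _ => 0).
have -> : (fun _ : site d n => 1 *: (0 : 'cV[R]_m) + 0) = fun _ => 0.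
  by apply: functional_extensionality => y; rewrite scaler0 addr0.
rewrite mul1r => h; lra.
Qed.

Lemma g_scale a (f : F) : g (fun y => a *: f y) = a * g f.
Proof.
have := g_lin a f (fun _ => 0).
have -> : (fun y => a *: f y + 0) = fun y => a *: f y.
  by apply: functional_extensionality => y; rewrite addr0.
by rewrite g0 addr0.
Qed.

Lemma g_add (f h : F) : g (fun y => f y + h y) = g f + g h.
Proof.
have := g_lin 1 f h.
have -> : (fun y => 1 *: f y + h y) = fun y => f y + h y.
  by apply: functional_extensionality => y; rewrite scale1r.
by rewrite mul1r.
Qed.

Lemma g_sum (T : Type) (s : seq T) (h : T -> F) :
  g (fun z => \sum_(p <- s) h p z) = \sum_(p <- s) g (h p).
Proof.
elim: s => [|p s IH].
  rewrite big_nil -g0; congr g; apply: functional_extensionality => z; exact: big_nil.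
rewrite big_cons -IH -g_add; congr g; apply: functional_extensionality => z; exact: big_cons.
Qed.

Lemma adj_exists : exists psi : F, inX psi /\
  forall chi, inX chi -> ip (S chi) phi = ip chi psi.
Proof.
pose dl (y : site d n) (i : 'I_m) : F := fun z => (z == y)%:R *: delta_mx i 0.
pose r : F := fun z => \col_(i < m) g (dl z i).
have gr : forall chi, g chi = ip chi r.
  move=> chi.
  have dec : chi = fun z => \sum_y \sum_(i < m) chi y i 0 *: dl y i z.
    apply: functional_extensionality => z; apply: vecE => k.
    rewrite summxE (eq_bigr (fun y => (z == y)%:R * chi y k 0)); last first.
      move=> y _; rewrite summxE (bigD1 k) //= big1 ?addr0; last first.
        by move=> i ik; rewrite /dl !mxE [k == i]eq_sym (negbTE ik) /= !mulr0.
      by rewrite /dl !mxE !eqxx /= mulr1 mulrC.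
    rewrite (bigD1 z) //= eqxx mul1r big1 ?addr0 // => y yz.
    by rewrite eq_sym (negbTE yz) mul0r.
  rewrite {1}dec g_sum /ip; apply: eq_bigr => y _.
  rewrite (g_sum (index_enum _) (fun i z => chi y i 0 *: dl y i z)); apply: eq_bigr => i _.
  by rewrite g_scale /r mxE.
set N := #|{: site d n}|.
have N0 : (N%:R : R) != 0.
  rewrite pnatr_eq0 -lt0n; apply/card_gt0P; exists [ffun _ => ord0]; done.
set avg := (N%:R)^-1 *: \sum_w r w.
exists (fun z => r z - avg); split.
  rewrite /inX sumrB sumr_const -scaler_nat /avg scalerA mulfV // scale1r subrr //.
move=> chi hchi.
rewrite -/(g chi) gr.
rewrite (_ : ip chi (fun z => r z - avg) = ip chi r - ip chi (fun _ => avg)); last first.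
  rewrite /ip -sumrB; apply: eq_bigr => y _; rewrite -sumrB; apply: eq_bigr => i _.
  by rewrite !mxE; ring.
suff -> : ip chi (fun _ => avg) = 0 by rewrite subr0.
rewrite /ip exchange_big big1 //= => i _.
rewrite -mulr_suml -summxE hchi mxE mul0r //.
Qed.
End Adj.

Lemma adjoint_spec (S : F -> F)
  (Slin : forall a (f g : F), S (fun y => a *: f y + g y) = fun y => a *: S f y + S g y)
  (phi : F) : inX (adjoint S phi) /\
  forall chi, inX chi -> ip (S chi) phi = ip chi (adjoint S phi).
Proof. exact: (epsilon_spec _ _ (adj_exists Slin phi)). Qed.

Lemma Top_lin a (f g : F) :
  Top A l (fun y => a *: f y + g y) = fun y => a *: Top A l f y + Top A l g y.
Proof.
apply: functional_extensionality => y; rewrite /Top.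
rewrite (eq_bigr (fun x => a *: Pi A l x f y + Pi A l x g y)); last by move=> x _; rewrite Pi_lin.
by rewrite big_split /= scalerDr -scaler_sumr !scalerA mulrC.
Qed.

Lemma Rop_lin a (f g : F) :
  Rop A l (fun y => a *: f y + g y) = fun y => a *: Rop A l f y + Rop A l g y.
Proof.
rewrite /Rop Top_lin; apply: functional_extensionality => y; apply: vecE => i.
by rewrite /fsub !mxE; ring.
Qed.

Lemma ip_sym (f h : F) : ip f h = ip h f.
Proof. by apply: eq_bigr => y _; apply: eq_bigr => i _; rewrite mulrC. Qed.

Lemma ip_Rop (f h : F) : ip (Rop A l f) h = ip f h - ip (Top A l f) h.
Proof.
have -> : Rop A l f = fun y => (-1) *: Top A l f y + f y.
  by apply: functional_extensionality => y; apply: vecE => i; rewrite /Rop /fsub !mxE; ring.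
rewrite ip_linl; ring.
Qed.
End Main.

Theorem lemma3p7 (R : realFieldType) (d m L N l : nat)
  (A : 'M[R]_(m, d) -> 'M[R]_(m, d)) (c0 : R) :
  (2 <= d)%N -> (1 <= m)%N -> (3 <= L)%N -> odd L -> (1 <= N)%N ->
  (forall (a : R) (F G : 'M[R]_(m, d)), A (a *: F + G) = a *: A F + A G) ->
  (forall F G : 'M[R]_(m, d), frob (A F) G = frob F (A G)) ->
  0 < c0 -> (forall F : 'M[R]_(m, d), c0 * frob F F <= frob (A F) F) ->
  (3 <= l)%N -> (l.-1 < L ^ N)%N ->
  forall phi psi : site d (L ^ N).-1 -> 'cV[R]_m,
  inX phi -> inX psi ->
  (forall x y, phi x != 0 -> psi y != 0 -> (l.-1 < rho x y)%N) ->
  [/\ ip (Top A l phi) psi = 0,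
      ip (adjoint (Top A l) phi) psi = 0,
      ip (Rop A l phi) psi = 0
    & ip (adjoint (Rop A l) phi) psi = 0].
Proof.
move=> hd _ _ _ _ Alin Asym c0p Acoer hl hlN phi psi Xphi Xpsi Hd.
have d0 : (0 < d)%N by apply: leq_trans hd.
have l1 : (1 < l)%N by apply: leq_trans hl.
have LN : (0 < L ^ N)%N by move: hlN; case: (L ^ N)%N.
have ln : (l <= (L ^ N)%N.-1.+1)%N by rewrite prednK //; lia.
have rho_le : forall (x : site d (L ^ N)%N.-1) (b q0 : 'I_d -> nat), (forall k, b k <= l)%N ->
    (forall k, 0 < q0 k < l)%N ->
    (rho (addq x b) (addq x q0) <= l.-1)%N /\ (rho (addq x q0) (addq x b) <= l.-1)%N.
  move=> x b q0 hb hq; split; apply/bigmax_leqP => j _; rewrite !ffunE;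
    apply: leq_trans (cdist_le _ _ _ _) _; move: (hb j) (hq j); lia.
have G1 : forall x (b q0 : 'I_d -> nat), (forall k, b k <= l)%N -> (forall k, 0 < q0 k < l)%N ->
      phi (addq x b) != 0 -> psi (addq x q0) != 0 -> False.
  move=> x b q0 hb hq h1 h2; have := Hd _ _ h1 h2; have [h _] := rho_le x b q0 hb hq; lia.
have G2 : forall x (b q0 : 'I_d -> nat), (forall k, b k <= l)%N -> (forall k, 0 < q0 k < l)%N ->
      psi (addq x b) != 0 -> phi (addq x q0) != 0 -> False.
  move=> x b q0 hb hq h1 h2; have := Hd _ _ h2 h1; have [_ h] := rho_le x b q0 hb hq; lia.
have T1 := part1 Alin Asym c0p Acoer d0 l1 ln G1.
have T2 := part1 Alin Asym c0p Acoer d0 l1 ln G2.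
have rho0 : forall x : site d (L ^ N)%N.-1, rho x x = 0%N.
  move=> x; apply/eqP; rewrite -leqn0; apply/bigmax_leqP => j _.
  by rewrite /cdist addKn modnn.
have I0 : forall (f h : site d (L ^ N)%N.-1 -> 'cV[R]_m),
    (forall y, f y != 0 -> h y != 0 -> False) -> ip f h = 0.
  move=> f h hfh; apply: big1 => y _.
  case: (eqVneq (f y) 0) => [->|hf]; first by apply: big1 => i _; rewrite mxE mul0r.
  case: (eqVneq (h y) 0) => [->|hh]; first by apply: big1 => i _; rewrite mxE mulr0.
  by case: (hfh y hf hh).
have P1 : ip phi psi = 0 by apply: I0 => y h1 h2; have := Hd _ _ h1 h2; rewrite rho0.
have P2 : ip psi phi = 0 by rewrite ip_sym.
split.
- exact: T1.
- have [_ h] := adjoint_spec (Top_lin Alin Asym c0p Acoer d0 l1 ln) phi.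
  by rewrite ip_sym -h.
- by rewrite ip_Rop P1 T1 subrr.
- have [_ h] := adjoint_spec (Rop_lin Alin Asym c0p Acoer d0 l1 ln) phi.
  by rewrite ip_sym -h // ip_Rop P2 T2 subrr.
Qed.
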